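(* Let $I_1,I_2,J$ be intervals of $B$. Suppose $I_1$ and $I_2$ are of the same type, and $J$ is not of the same type as $I_1$ nor as $I_2$. Then every composition of morphisms $k_{I_1}\to k_J\to k_{I_2}$ is zero.
   Context: Let $k$ be a field. The bipath poset $B$ has underlying set $(\mathbb{R}\times\{1,2\})\sqcup\{-\infty,+\infty\}$. Its order is: $x\le y$ iff $x=-\infty$, or $y=+\infty$, or $x=(s,i)$, $y=(t,i)$ with the same $i$ and $s\le t$. $B$-persistence modules are functors from $B$ (as a category) to $k$-vector spaces, with morphisms the natural transformations. An interval of $B$ is a nonempty convex and connected subset (convex: $p,q\in I$, $p\le r\le q$ imply $r\in I$; connected: any two elements are joined by a finite sequence in $I$ with consecutive ones comparable). The interval module $k_I$ is $k$ on $I$ and $0$ elsewhere, with identity maps within $I$ and zero maps otherwise. The types of intervals are: - $\mathcal{U}$: intervals contained in $\mathbb{R}\times\{1\}$; - $\mathcal{D}$: intervals contained in $\mathbb{R}\times\{2\}$; - $\mathcal{B}=\{B\}$; - $\mathcal{L}$: intervals $\neq B$ containing $-\infty$; - $\mathcal{R}$: intervals $\neq B$ containing $+\infty$. Two intervals are of the same type if they lie in the same one of these five sets. *)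

(* Defs.v *)
From Stdlib Require Import Reals.
From mathcomp Require Import all_boot all_order all_algebra.

Set Implicit Arguments. Unset Strict Implicit. Unset Printing Implicit Defensive.
Import GRing.Theory.
Local Open Scope ring_scope.

Inductive branch := br1 | br2.

(* Underlying set of the bipath poset: (R x {1,2}) + {-oo, +oo}. *)
Inductive Bpt :=
| Bbot : Bpt
| Btop : Bpt
| Bp : Rdefinitions.R -> branch -> Bpt.

Definition Ble (x y : Bpt) : Prop :=
  match x, y with
  | Bbot, _ => True
  | _, Btop => True
  | Bp s i, Bp t j => i = j /\ Rle s t
  | _, _ => False
  end.

Definition Bcomparable (x y : Bpt) : Prop := Ble x y \/ Ble y x.

Definition convex (I : pred Bpt) : Prop :=
  forall p q r, I p -> I q -> Ble p r -> Ble r q -> I r.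

Definition connected (I : pred Bpt) : Prop :=
  forall p q, I p -> I q ->
    exists (n : nat) (f : nat -> Bpt),
      f 0%N = p /\ f n = q /\
      (forall i, (i <= n)%N -> I (f i)) /\
      (forall i, (i < n)%N -> Bcomparable (f i) (f i.+1)).

Definition is_interval (I : pred Bpt) : Prop :=
  (exists x, I x) /\ convex I /\ connected I.

Definition typeU (I : pred Bpt) : Prop := forall x, I x -> exists s, x = Bp s br1.
Definition typeD (I : pred Bpt) : Prop := forall x, I x -> exists s, x = Bp s br2.
Definition typeB (I : pred Bpt) : Prop := forall x, I x.
Definition typeL (I : pred Bpt) : Prop := I Bbot /\ ~ typeB I.
Definition typeR (I : pred Bpt) : Prop := I Btop /\ ~ typeB I.

Definition same_type (I J : pred Bpt) : Prop :=
  (typeU I /\ typeU J) \/ (typeD I /\ typeD J) \/ (typeB I /\ typeB J) \/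
  (typeL I /\ typeL J) \/ (typeR I /\ typeR J).

(* Interval module k_I: at x it is k^(dim I x), i.e. k if x \in I and 0
   otherwise; vectors are row vectors, linear maps are matrices acting
   on the right (v |-> v *m A). *)
Definition idim (I : pred Bpt) (x : Bpt) : nat := I x.

Definition imap (k : fieldType) (I : pred Bpt) (x y : Bpt)
  : 'M[k]_(idim I x, idim I y) :=
  \matrix_(i, j) (if I x && I y then 1 else 0).

Definition is_morphism (k : fieldType) (I J : pred Bpt)
  (phi : forall x, 'M[k]_(idim I x, idim J x)) : Prop :=
  forall x y, Ble x y -> imap k I x y *m phi y = phi x *m imap k J x y.

(* Main.v *)
Require Import Defs.
From Stdlib Require Import Reals Classical.
From mathcomp Require Import all_boot all_order all_algebra.
Local Open Scope ring_scope.
Import GRing.Theory.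

Lemma idim_true {I : pred Bpt} {x} (i : 'I_(idim I x)) : I x.
Proof. have := leq_ltn_trans (leq0n i) (ltn_ord i); rewrite /idim; by case: (I x). Qed.

Lemma ord_idim_eq {I : pred Bpt} {x} (i j : 'I_(idim I x)) : i = j.
Proof.
apply: val_inj.
have h : (idim I x <= 1)%N by rewrite /idim; case: (I x).
have hi := leq_trans (ltn_ord i) h; have hj := leq_trans (ltn_ord j) h.
move: hi hj; rewrite !ltnS !leqn0 /= => /eqP a /eqP b; by rewrite a b.
Qed.

Lemma morph_below (k : fieldType) (I J : pred Bpt)
  (phi : forall x, 'M[k]_(idim I x, idim J x)) :
  is_morphism phi -> forall x' x, Ble x' x -> I x' -> ~~ J x' -> I x -> J x ->
  forall i l, phi x i l = 0.
Proof.
move=> Hm x' x le Ix' nJx' Ix Jx i l.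
have h0 : (0 < idim I x')%N by rewrite /idim Ix'.
have := congr1 (fun M : 'M[k]_(_,_) => M (Ordinal h0) l) (Hm _ _ le).
rewrite !mxE.
rewrite [X in _ = X]big1 => [|m _]; last first.
  by have := idim_true (I:=_) m; rewrite (negbTE nJx').
rewrite (bigD1 i) //= big1 => [|m Hmi]; last by rewrite (ord_idim_eq m i) eqxx in Hmi.
by rewrite !mxE Ix' Ix /= mul1r addr0.
Qed.

Lemma morph_above (k : fieldType) (I J : pred Bpt)
  (phi : forall x, 'M[k]_(idim I x, idim J x)) :
  is_morphism phi -> forall x y', Ble x y' -> J y' -> ~~ I y' -> I x -> J x ->
  forall i l, phi x i l = 0.
Proof.
move=> Hm x y' le Jy' nIy' Ix Jx i l.
have h0 : (0 < idim J y')%N by rewrite /idim Jy'.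
have := congr1 (fun M : 'M[k]_(_,_) => M i (Ordinal h0)) (Hm _ _ le).
rewrite !mxE.
rewrite [X in X = _]big1 => [|m _]; last first.
  by have := idim_true (I:=_) m; rewrite (negbTE nIy').
rewrite (bigD1 l) //= big1 => [|m Hmi]; last by rewrite (ord_idim_eq m l) eqxx in Hmi.
by rewrite !mxE Jy' Jx /= mulr1 addr0.
Qed.

Lemma Ble_bot x : Ble Bbot x. Proof. by case: x. Qed.
Lemma Ble_top x : Ble x Btop. Proof. by case: x. Qed.

Lemma conv_all (I : pred Bpt) : convex I -> I Bbot -> I Btop -> forall z, I z.
Proof. move=> c hb ht z; exact: (c Bbot Btop z hb ht (Ble_bot z) (Ble_top z)). Qed.

Lemma branch_path (J : pred Bpt) b : J Bbot = false -> J Btop = false ->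
  forall n (f : nat -> Bpt) s, f 0%N = Bp s b ->
  (forall i, (i <= n)%N -> J (f i)) ->
  (forall i, (i < n)%N -> Bcomparable (f i) (f i.+1)) ->
  forall i, (i <= n)%N -> exists t, f i = Bp t b.
Proof.
move=> nb nt n f s f0 HJ Hc; elim=> [|i IH] Hi; first by exists s.
have [t ft] := IH (ltnW Hi).
have := HJ _ Hi; have := Hc _ Hi.
case: (f i.+1) => [| |u c]; rewrite ?nb ?nt // ft.
by case=> [[-> _]|[-> _]] _; exists u.
Qed.

Lemma branch_type (J : pred Bpt) b s : connected J -> J Bbot = false -> J Btop = false ->
  J (Bp s b) -> forall z, J z -> exists t, z = Bp t b.
Proof.
move=> c nb nt Js z Jz.
have [n [f [f0 [fn [HJ Hc]]]]] := c _ _ Js Jz.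
rewrite -fn; exact: (@branch_path J b nb nt n f s f0 HJ Hc n (leqnn n)).
Qed.

Lemma key (I1 I2 J : pred Bpt) :
  is_interval I1 -> is_interval I2 -> is_interval J ->
  same_type I1 I2 -> ~ same_type I1 J -> ~ same_type I2 J ->
  forall x, I1 x -> J x -> I2 x ->
  (exists x', Ble x' x /\ I1 x' /\ ~~ J x') \/
  (exists y', Ble x y' /\ J y' /\ ~~ I1 y') \/
  (exists x', Ble x' x /\ J x' /\ ~~ I2 x') \/
  (exists y', Ble x y' /\ I2 y' /\ ~~ J y').
Proof.
move=> [_ [c1 _]] [_ [c2 _]] [_ [cJ kJ]] st n1 n2 x I1x Jx I2x.
case: st => [[U1 U2]|[[U1 U2]|[[U1 U2]|[[[L1 nB1] [L2 nB2]]|[[R1 nB1] [R2 nB2]]]]]].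
- have [s xs] := U1 x I1x.
  case JT: (J Btop).
    right; left; exists Btop; split; first exact: Ble_top.
    split=> //; apply/negP => /U1 [? ?]; discriminate.
  case JB: (J Bbot).
    right; right; left; exists Bbot; split; first exact: Ble_bot.
    split=> //; apply/negP => /U2 [? ?]; discriminate.
  exfalso; apply: n1; left; split=> //.
  rewrite xs in Jx; exact: (@branch_type J _ _ kJ JB JT Jx).
- have [s xs] := U1 x I1x.
  case JT: (J Btop).
    right; left; exists Btop; split; first exact: Ble_top.
    split=> //; apply/negP => /U1 [? ?]; discriminate.
  case JB: (J Bbot).
    right; right; left; exists Bbot; split; first exact: Ble_bot.
    split=> //; apply/negP => /U2 [? ?]; discriminate.
  exfalso; apply: n1; right; left; split=> //.
  rewrite xs in Jx; exact: (@branch_type J _ _ kJ JB JT Jx).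
- case JB: (J Bbot); last first.
    left; exists Bbot; split; first exact: Ble_bot.
    by rewrite JB.
  case JT: (J Btop); last first.
    right; right; right; exists Btop; split; first exact: Ble_top.
    by rewrite JT.
  exfalso; apply: n1; right; right; left; split=> //.
  exact: conv_all.
- case JT: (J Btop).
    right; left; exists Btop; split; first exact: Ble_top.
    split=> //; apply/negP => T1; apply: nB1; exact: conv_all.
  case JB: (J Bbot).
    exfalso; apply: n1; right; right; right; left; split=> //; split=> //.
    by move=> /(_ Btop); rewrite JT.
  left; exists Bbot; split; first exact: Ble_bot.
  by rewrite JB.
- case JB: (J Bbot).
    right; right; left; exists Bbot; split; first exact: Ble_bot.
    split=> //; apply/negP => B2; apply: nB2; exact: conv_all.
  case JT: (J Btop).
    exfalso; apply: n1; right; right; right; right; split=> //; split=> //.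
    by move=> /(_ Bbot); rewrite JB.
  right; right; right; exists Btop; split; first exact: Ble_top.
  by rewrite JT.
Qed.

Theorem corollary4p5 (k : fieldType) (I1 I2 J : pred Bpt) :
  is_interval I1 -> is_interval I2 -> is_interval J ->
  same_type I1 I2 -> ~ same_type I1 J -> ~ same_type I2 J ->
  forall (phi : forall x, 'M[k]_(idim I1 x, idim J x))
         (psi : forall x, 'M[k]_(idim J x, idim I2 x)),
  is_morphism phi -> is_morphism psi ->
  forall x, phi x *m psi x = 0.
Proof.
move=> i1 i2 iJ st n1 n2 phi psi Hphi Hpsi x.
apply/matrixP => i j; rewrite !mxE; apply: big1 => l _.
have I1x := idim_true i; have I2x := idim_true j; have Jx := idim_true l.
have [[x' [le [A B]]]|[[y' [le [A B]]]|[[x' [le [A B]]]|[y' [le [A B]]]]]] :=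
  @key I1 I2 J i1 i2 iJ st n1 n2 x I1x Jx I2x.
- by rewrite (@morph_below k I1 J phi Hphi _ _ le A B I1x Jx) mul0r.
- by rewrite (@morph_above k I1 J phi Hphi _ _ le A B I1x Jx) mul0r.
- by rewrite (@morph_below k J I2 psi Hpsi _ _ le A B Jx I2x) mulr0.
- by rewrite (@morph_above k J I2 psi Hpsi _ _ le A B Jx I2x) mulr0.
Qed.
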